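(* Let $X$ and $Y$ be random variables with mean zero, variance $\sigma^2\in(0,\infty)$, and densities $f_X$ and $f_Y$. Let $X^*$ and $Y^*$ have the zero bias distributions of $X$ and $Y$, with $f_{Y^*}$ the density of $Y^*$. Suppose there is $x_0\ge0$ such that 1. $t\mapsto f_X(t)/f_Y(t)$ is decreasing on $t\ge x_0$; 2. for each $x\ge x_0$ there is a constant $a_Y(x)$ depending only on $x$ such that $f_{Y^*}(t)/f_Y(t)\le a_Y(x)$ for all $t\ge x$. Then $\mathbb{P}(X^*\ge x)\le a_Y(x)\,\mathbb{P}(X\ge x)$ for all $x\ge x_0$.
   Context: Zero bias transform: for $X$ with mean zero and finite variance $\sigma^2$, $X^*$ has the zero bias distribution of $X$ if $\mathbb{E}[Xf(X)]=\sigma^2\mathbb{E}[f'(X^* )]$ for all absolutely continuous $f$ for which the expectations exist; $X^*$ is absolutely continuous with density $f_{X^*}(t)=\sigma^{-2}\mathbb{E}[X\mathbb{I}_{X>t}]$. *)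

(* Defs.v *)
From HB Require Import structures.
From mathcomp Require Import all_boot all_order all_algebra.
From mathcomp Require Import all_classical all_reals all_analysis.
Set Implicit Arguments. Unset Strict Implicit. Unset Printing Implicit Defensive.
Import Order.TTheory GRing.Theory Num.Theory.
Local Open Scope classical_set_scope.
Local Open Scope ring_scope.

Definition has_density d (T : measurableType d) (R : realType)
  (P : probability T R) (Z : {RV P >-> R}) (f : R -> R) : Prop :=
  forall A : set R, measurable A ->
    P (Z @^-1` A) = (\int[@lebesgue_measure R]_(t in A) (f t)%:E)%E.

Definition X_above d (T : measurableType d) (R : realType) (X : T -> R) (t : R)
  : T -> R := fun w => X w * ((t < X w)%R)%:R.

(* Density of the zero bias distribution of X (mean zero, variance s2):
   f_{X^*}(t) = s2^-1 * E[X 1_{X > t}]. *)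
Definition zero_bias_density d (T : measurableType d) (R : realType)
  (P : probability T R) (X : T -> R) (s2 : R) (t : R) : R :=
  s2^-1 * fine ('E_P[X_above X t])%E.

(* Main.v *)
Require Import Defs.
From HB Require Import structures.
From mathcomp Require Import all_boot all_order all_algebra.
From mathcomp Require Import all_classical all_reals all_analysis.
From mathcomp Require Import measurable_realfun.
Import Order.TTheory GRing.Theory Num.Theory.
Local Open Scope classical_set_scope.
Local Open Scope ring_scope.
Import HBNNSimple.

Section gen.
Local Open Scope ereal_scope.
Context d (T : measurableType d) (R : realType).

Lemma lowint_le (mu : {measure set T -> \bar R}) (D : set T) (f g : T -> \bar R) :
  (forall x, D x -> 0 <= f x) -> (forall x, D x -> f x <= g x) ->
  \int[mu]_(x in D) f x <= \int[mu]_(x in D) g x.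
Proof.
move=> f0 fg.
have g0 x : D x -> 0 <= g x by move=> Dx; exact: le_trans (f0 _ Dx) (fg _ Dx).
rewrite (@ge0_integralE _ _ _ mu D f f0) (@ge0_integralE _ _ _ mu D g g0).
apply: le_ereal_sup => _ [h hf <-]; exists h => // x.
apply: le_trans (hf x) _; rewrite /patch; case: ifPn => // /[!inE] Dx.
exact: fg.
Qed.

Lemma lowint_scale_le (mu : {measure set T -> \bar R}) (D : set T) (f : T -> \bar R) (k : R) :
  (0 <= k)%R -> (forall x, D x -> 0 <= f x) ->
  \int[mu]_(x in D) (k%:E * f x) <= k%:E * \int[mu]_(x in D) f x.
Proof.
move=> k0 f0; have [->|kn0] := eqVneq k 0%R.
  by rewrite integral0_eq ?mul0e// => x _; rewrite mul0e.
have kp : (0 < k)%R by rewrite lt_neqAle eq_sym kn0.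
have kf0 x : D x -> 0 <= k%:E * f x by move=> Dx; rewrite mule_ge0 ?lee_fin ?f0.
rewrite (@ge0_integralE _ _ _ mu D _ kf0) (@ge0_integralE _ _ _ mu D f f0).
apply: ge_ereal_sup => _ [h hf <-].
have ki0 : (0 <= k^-1)%R by rewrite invr_ge0.
pose h' := scale_nnsfun h ki0.
have -> : sintegral mu h = k%:E * sintegral mu h'.
  rewrite [X in _ = _ * X](eq_sintegral (cst k^-1 \* h)%R) // sintegralrM muleA -EFinM mulfV //.
  by rewrite mul1e.
rewrite lee_pmul2l ?lte_fin // ?fin_numE //.
apply: ereal_sup_ubound; exists h' => // x /=.
have := hf x; rewrite /patch; case: ifPn => _ hx.
  rewrite -(@lee_pmul2l _ k%:E) ?lte_fin // ?fin_numE //.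
  by rewrite -EFinM mulrA mulfV // mul1r.
by move: hx; rewrite /point /= !lee_fin => hx; rewrite mulr_ge0_le0.
Qed.

End gen.

Section gen2.
Local Open Scope ereal_scope.
Context d (T : measurableType d) (R : realType).

Lemma le_int_measure_on (m1 m2 : {measure set T -> \bar R}) (A0 : set T) (rho : R)
  (f : T -> \bar R) : (0 <= rho)%R ->
  (forall S, measurable S -> S `<=` A0 -> m1 S <= rho%:E * m2 S) ->
  (forall x, 0 <= f x) -> (forall x, ~ A0 x -> f x = 0) ->
  \int[m1]_x f x <= rho%:E * \int[m2]_x f x.
Proof.
move=> rho0 m12 f0 fA0.
rewrite (@ge0_integralTE _ _ _ m1 f f0) (@ge0_integralTE _ _ _ m2 f f0).
apply: ge_ereal_sup => _ [h hf <-].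
apply: (@le_trans _ _ (rho%:E * sintegral m2 h)); last first.
  apply: lee_wpmul2l; first by rewrite lee_fin.
  by apply: ereal_sup_ubound; exists h.
rewrite !sintegralE ge0_mule_fsumr; last exact: nnsfun_mulemu_ge0.
apply: lee_fsum => // r [y _ <-].
have [->|hy0] := eqVneq (h y) 0%R; first by rewrite !mul0e mule0.
have sub : h @^-1` [set h y] `<=` A0.
  move=> z /= hz; apply/not_notP => nA.
  have := hf z; rewrite fA0 // lee_fin => hz0.
  have : (h z = 0)%R by apply/eqP; rewrite eq_le hz0 fun_ge0.
  by rewrite hz => /eqP; rewrite (negbTE hy0).
rewrite muleCA; apply: lee_wpmul2l; first by rewrite lee_fin fun_ge0.
exact: m12.
Qed.

End gen2.

Section gen3.
Local Open Scope ereal_scope.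
Context d (T : measurableType d) (R : realType).

Lemma dens_le (mu : {measure set T -> \bar R}) (S : set T) (f g : T -> R) (rho : R) :
  (0 <= rho)%R -> (forall u, S u -> (0 <= g u)%R) -> (forall u, S u -> (f u <= rho * g u)%R) ->
  \int[mu]_(u in S) (f u)%:E <= rho%:E * \int[mu]_(u in S) (g u)%:E.
Proof.
move=> rho0 g0 fg; rewrite integralE.
apply: (@le_trans _ _ (\int[mu]_(u in S) ((fun u => (f u)%:E)^\+ u))).
  rewrite -[leRHS]sube0; apply: leeB => //; exact: integral_ge0.
apply: (@le_trans _ _ (\int[mu]_(u in S) (rho%:E * (g u)%:E))).
  apply: lowint_le => // u Su; rewrite funeposE ge_max; apply/andP; split.
    by rewrite -EFinM lee_fin fg.
  by rewrite mule_ge0 // lee_fin g0.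
by apply: lowint_scale_le => // u Su; rewrite lee_fin g0.
Qed.

Lemma E_above_distr (P : probability T R) (X : {RV P >-> R}) (t : R) : (0 <= t)%R ->
  'E_P[X_above X t] = \int[distribution P X]_u (u * ((t < u)%R)%:R)%:E.
Proof.
move=> t0; rewrite ge0_integral_distribution //=.
- by rewrite unlock.
- apply: measurableT_comp => //; apply: measurable_funM => //.
  have -> : (fun u : R => (((t < u)%R)%:R : R)) = \1_(`]t, +oo[%classic).
    apply/funext => u; rewrite indicE; congr (_%:R); congr (nat_of_bool _).
    apply/idP/idP => [h|/set_mem]; [apply/mem_set; rewrite /= in_itv/= andbT|rewrite /= in_itv/= andbT] => //.
  apply: measurable_realfun.measurable_indic; exact: measurable_itv.
- move=> u; rewrite lee_fin; case: ltP => h; rewrite ?mulr1 ?mulr0 //.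
  exact: le_trans t0 (ltW h).
Qed.

End gen3.

Section gen4.
Local Open Scope ereal_scope.
Context d (T : measurableType d) (R : realType).
Lemma key_cmp (P1 : probability T R) (X : {RV P1 >-> R})
  d2 (T2 : measurableType d2) (P2 : probability T2 R) (Y : {RV P2 >-> R}) (t rho : R) :
  (0 <= t)%R -> (0 <= rho)%R ->
  (forall S, measurable S -> S `<=` `]t, +oo[%classic ->
     P1 (X @^-1` S) <= rho%:E * P2 (Y @^-1` S)) ->
  'E_P1[X_above X t] <= rho%:E * 'E_P2[X_above Y t].
Proof.
move=> t0 rho0 HS; rewrite !E_above_distr //.
apply: (@le_int_measure_on _ _ _ _ _ `]t, +oo[%classic) => //.
- move=> u; rewrite lee_fin; case: ltP => h; rewrite ?mulr1 ?mulr0 //.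
  exact: le_trans t0 (ltW h).
- move=> u /= h; case: ltP => h'; rewrite ?mulr0 //.
  by exfalso; apply: h; rewrite /= in_itv /= andbT.
Qed.

End gen4.

Section gen5.
Local Open Scope ereal_scope.
Context d (T : measurableType d) (R : realType).

Lemma ind_meas (t : R) : measurable_fun [set: R] (fun u : R => (((t < u)%R)%:R : R)).
Proof.
have -> : (fun u : R => (((t < u)%R)%:R : R)) = \1_(`]t, +oo[%classic).
  apply/funext => u; rewrite indicE; congr (_%:R); congr (nat_of_bool _).
  apply/idP/idP => [h|/set_mem]; [apply/mem_set; rewrite /= in_itv/= andbT|rewrite /= in_itv/= andbT] => //.
apply: measurable_realfun.measurable_indic; exact: measurable_itv.
Qed.

Lemma Eabove_fin (P : probability T R) (Y : {RV P >-> R}) (t : R) :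
  (Y : T -> R) \in Lfun P 2%:E -> 'E_P[X_above Y t] \is a fin_num.
Proof.
move=> YL2; apply: expectation_fin_num; apply/Lfun1_integrable.
have Y1 : (Y : T -> R) \in Lfun P 1.
  apply: Lfun_subset12 => //.
  by rewrite fin_num_measure.
move/Lfun1_integrable: Y1 => Yint.
apply: le_integrable Yint => //.
- apply: measurableT_comp => //; apply: measurable_funM => //.
  exact: (measurableT_comp (ind_meas t)).
- move=> w _ /=; rewrite /X_above; case: ltP => _; rewrite ?mulr1 ?mulr0 //.
  by rewrite normr0 lee_fin.
Qed.

Lemma Eabove_ge0 (P : probability T R) (Y : T -> R) (t : R) : (0 <= t)%R ->
  0 <= 'E_P[X_above Y t].
Proof.
move=> t0; rewrite unlock; apply: integral_ge0 => w _; rewrite lee_fin /X_above.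
case: ltP => h; rewrite ?mulr1 ?mulr0 //; exact: le_trans t0 (ltW h).
Qed.

Lemma zb_ge0 (P : probability T R) (Y : T -> R) (s2 t : R) : (0 < s2)%R -> (0 <= t)%R ->
  (0 <= zero_bias_density P Y s2 t)%R.
Proof.
move=> s0 t0; rewrite /zero_bias_density mulr_ge0 ?invr_ge0 ?(ltW s0) //.
exact/fine_ge0/Eabove_ge0.
Qed.

End gen5.

Theorem proposition2p2 (R : realType)
  (d1 : measure_display) (T1 : measurableType d1) (P1 : probability T1 R)
  (d2 : measure_display) (T2 : measurableType d2) (P2 : probability T2 R)
  (d3 : measure_display) (T3 : measurableType d3) (P3 : probability T3 R)
  (X : {RV P1 >-> R}) (Y : {RV P2 >-> R}) (Xs : {RV P3 >-> R})
  (s2 : R) (fX fY : R -> R) (x0 : R) (aY : R -> R) :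
  0 < s2 ->
  (X : T1 -> R) \in Lfun P1 2%:E -> ('E_P1[X] = 0)%E -> ('V_P1[X] = s2%:E)%E ->
  (Y : T2 -> R) \in Lfun P2 2%:E -> ('E_P2[Y] = 0)%E -> ('V_P2[Y] = s2%:E)%E ->
  has_density X fX -> has_density Y fY ->
  has_density Xs (zero_bias_density P1 X s2) ->
  0 <= x0 ->
  (forall t, x0 <= t -> 0 < fY t) ->
  (forall s t, x0 <= s -> s <= t -> fX t / fY t <= fX s / fY s) ->
  (forall x, x0 <= x -> forall t, x <= t ->
      zero_bias_density P2 Y s2 t / fY t <= aY x) ->
  forall x, x0 <= x ->
    (P3 (Xs @^-1` `[x, +oo[) <= (aY x)%:E * P1 (X @^-1` `[x, +oo[))%E.
Proof.
move=> s0 XL2 _ _ YL2 _ _ dX dY dXs x00 fYp rat aYb x xx0.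
set c := aY x.
have x0' : 0 <= x by exact: le_trans x00 xx0.
have c0 : 0 <= c.
  apply: le_trans (aYb x xx0 x (lexx x)).
  by rewrite divr_ge0 ?zb_ge0 // ltW // fYp.
pose zX := zero_bias_density P1 X s2.
pose zY := zero_bias_density P2 Y s2.
have HS : forall t rho, x0 <= t -> 0 <= rho ->
    (forall u, t < u -> fX u <= rho * fY u) ->
    forall S, measurable S -> S `<=` `]t, +oo[%classic ->
     (P1 (X @^-1` S) <= rho%:E * P2 (Y @^-1` S))%E.
  move=> t rho xt rho0 fXY S mS St.
  rewrite dX // dY //; apply: dens_le => // u /St /=; rewrite in_itv /= andbT => tu.
    by apply/ltW/fYp/(le_trans xt)/ltW.
  exact: fXY.
pose N := [set u | x <= u /\ fX u < 0].
have UC : forall y u, N y -> y <= u -> N u.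
  move=> y u [xy fy] yu; split; first exact: le_trans xy yu.
  have x0y : x0 <= y := le_trans xx0 xy.
  have fYu : 0 < fY u by apply: fYp; exact: le_trans x0y yu.
  have fYy : 0 < fY y by apply: fYp.
  have r := rat y u x0y yu.
  have ry : fX y / fY y < 0 by rewrite pmulr_llt0 ?invr_gt0.
  rewrite ltNge; apply/negP => h.
  have : 0 <= fX u / fY u by rewrite divr_ge0 // ltW.
  by move=> h'; have := le_lt_trans (le_trans h' r) ry; rewrite ltxx.
have SP : forall t, x <= t -> 0 <= fX t -> zX t <= c * fX t.
  move=> t xt ft0.
  have x0t : x0 <= t := le_trans xx0 xt.
  have t0 : 0 <= t := le_trans x0' xt.
  have fYt : 0 < fY t by apply: fYp.
  pose rho := fX t / fY t.
  have rho0 : 0 <= rho by rewrite divr_ge0 // ltW.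
  have fXY : forall u, t < u -> fX u <= rho * fY u.
    move=> u tu; have fYu : 0 < fY u by apply: fYp; exact: le_trans x0t (ltW tu).
    by have := rat t u x0t (ltW tu); rewrite ler_pdivrMr.
  have E := @key_cmp _ _ _ P1 X _ _ P2 Y t rho t0 rho0 (HS t rho x0t rho0 fXY).
  have fin1 := @Eabove_fin _ _ _ P1 X t XL2.
  have fin2 := @Eabove_fin _ _ _ P2 Y t YL2.
  rewrite -(fineK fin1) -(fineK fin2) -EFinM lee_fin in E.
  have zYt : zY t <= c * fY t.
    by have := aYb x xx0 t xt; rewrite ler_pdivrMr.
  apply: (@le_trans _ _ (rho * zY t)).
    rewrite /zX /zY /zero_bias_density mulrCA ler_wpM2l // ?invr_ge0 ?ltW //.
  apply: (@le_trans _ _ (rho * (c * fY t))); first exact: ler_wpM2l.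
  by rewrite mulrCA /rho divfK // gt_eqF.
have SZ : forall t, N t -> zX t = 0.
  move=> t Nt; have [xt ft] := Nt.
  have x0t : x0 <= t := le_trans xx0 xt.
  have t0 : 0 <= t := le_trans x0' xt.
  have fXY : forall u, t < u -> fX u <= 0 * fY u.
    by move=> u tu; rewrite mul0r; have [_ /ltW] := UC t u Nt (ltW tu).
  have E := @key_cmp _ _ _ P1 X _ _ P2 Y t 0 t0 (lexx 0) (HS t 0 x0t (lexx 0) fXY).
  rewrite mul0e in E.
  have E0 : ('E_P1[X_above X t] = 0)%E.
    by apply/eqP; rewrite eq_le E Eabove_ge0.
  by rewrite /zX /zero_bias_density E0 /= mulr0.
have mN : measurable N.
  have [->|nN] := pselect (N = set0); first exact: measurable0.
  have {}nN : N !=set0 by apply/set0P/eqP.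
  have lbN : has_lbound N by exists x => u [].
  pose m := inf N.
  have geN : forall u, N u -> m <= u by move=> u Nu; exact: ge_inf lbN _ Nu.
  have gtN : forall u, m < u -> N u.
    by move=> u /(inf_lt nN) [y Ny yu]; exact: UC y u Ny (ltW yu).
  have [Nm|Nm] := pselect (N m).
    have -> : N = `[m, +oo[%classic.
      apply/seteqP; split => u /=; rewrite in_itv /= andbT; first exact: geN.
      by rewrite le_eqVlt => /predU1P [<-|] //; exact: gtN.
    exact: measurable_itv.
  have -> : N = `]m, +oo[%classic.
    apply/seteqP; split => u /=; rewrite in_itv /= andbT; last exact: gtN.
    move=> Nu; rewrite lt_neqAle geN // andbT; apply/eqP => mu.
    by apply: Nm; rewrite mu.
  exact: measurable_itv.
have mI : measurable (`[x, +oo[%classic : set R) by exact: measurable_itv.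
rewrite dXs //.
pose J := `[x, +oo[%classic `&` ~` N.
have mJ : measurable J by apply: measurableI => //; exact: measurableC.
have JI : J `<=` `[x, +oo[%classic by move=> u [].
have -> : (\int[lebesgue_measure]_(t in `[x, +oo[%classic) (zX t)%:E =
           \int[lebesgue_measure]_(t in J) (zX t)%:E)%E.
  rewrite integral_mkcond. rewrite [RHS]integral_mkcond.
  congr (integral _ _ _); apply/funext => u; rewrite /patch.
  case: ifPn => h1; case: ifPn => h2 //.
    rewrite SZ //; move: h1 h2; rewrite !inE => h1 h2.
    by apply/not_notP => nN; apply: (negP h2); rewrite inE; split.
  by exfalso; move: h1 => /negP; apply; rewrite inE; apply: JI; move: h2; rewrite inE.
have JfX : forall u, J u -> 0 <= fX u.
  move=> u [Iu nNu]; rewrite leNgt; apply/negP => fu; apply: nNu; split => //.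
  by move: Iu; rewrite /= in_itv /= andbT.
apply: (@le_trans _ _ (\int[lebesgue_measure]_(t in J) (c%:E * (fX t)%:E))%E).
  apply: lowint_le => u Ju.
    by rewrite lee_fin; apply: zb_ge0 => //; apply: le_trans x0' _; have := JI u Ju; rewrite /= in_itv /= andbT.
  rewrite -EFinM lee_fin; apply: SP; last exact: JfX.
  by have := JI u Ju; rewrite /= in_itv /= andbT.
apply: (le_trans (@lowint_scale_le _ _ _ lebesgue_measure J (fun t => (fX t)%:E) c c0 _)).
  by move=> u Ju; rewrite lee_fin; apply: JfX.
rewrite -dX //; apply: lee_wpmul2l; first by rewrite lee_fin.
apply: le_measure; rewrite ?inE.
- exact: measurable_funPTI.
- exact: measurable_funPTI.
- by move=> w /= /JI.
Qed.
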